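(* Let $K=u^2\partial_u-2(1+uR)\partial_R$. Then $$\hat g(K,K)=4u^2\Big(1+Ru+\tfrac14R^2u^2f(R)\Big).$$ Furthermore, the following are equivalent: - $f(0)>\frac34$; - there exist $u_0<0$ and $c>0$ such that $\hat g(K,K)\ge c\,u^2$ on $\Omega_{u_0}$ (i.e. $K$ is uniformly timelike on $\Omega_{u_0}$).
   Context: Let $a>0$ and let $f$ be an analytic positive function on $[0,a)$. On a manifold with coordinates $(u,R,\omega)\in\mathbb R\times[0,a)\times S^2$ consider $$\hat g=R^2f(R)\,du^2-2\,du\,dR-d\omega^2,$$ with future null infinity $\mathscr I^+=\{R=0\}$. Put $r=1/R$. Fix a function $r_*$ of $r$ with $\frac{dr_*}{dr}=\frac1{f(1/r)}$ (equivalently $dR=-R^2f(R)\,dr_*$), and set $t=u+r_*$. For $u_0<0$, let $\Omega_{u_0}=\{t\ge0\}\cap\{u<u_0\}$. *)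

(* Defs.v *)
From Stdlib Require Import Reals.
From Coquelicot Require Import Coquelicot.
Open Scope R_scope.

Definition analytic_on_0a (a : R) (f : R -> R) : Prop :=
  forall x0, 0 <= x0 < a ->
    exists (c : nat -> R) (d : R), 0 < d /\
      forall x, 0 <= x < a -> Rabs (x - x0) < d -> is_pseries c (x - x0) (f x).

(* The metric  g^ = R^2 f(R) du^2 - 2 du dR - dω^2, in coordinates
   (u, R, θ, φ) with dω^2 = dθ^2 + sin^2 θ dφ^2, evaluated at the point
   with coordinates R = Rc, θ = th on the vectors X = (Xu,XR,Xt,Xp),
   Y = (Yu,YR,Yt,Yp) (components along ∂u, ∂R, ∂θ, ∂φ). *)
Definition ghat (f : R -> R) (Rc th : R)
  (Xu XR Xt Xp Yu YR Yt Yp : R) : R :=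
  Rc ^ 2 * f Rc * Xu * Yu - (Xu * YR + XR * Yu)
  - (Xt * Yt + (sin th) ^ 2 * Xp * Yp).

Definition K_u (u Rc : R) : R := u ^ 2.
Definition K_R (u Rc : R) : R := -2 * (1 + u * Rc).

Definition gKK (f : R -> R) (u Rc th : R) : R :=
  ghat f Rc th (K_u u Rc) (K_R u Rc) 0 0 (K_u u Rc) (K_R u Rc) 0 0.

(* The region Ω_{u0} = {t >= 0} ∩ {u < u0}, t = u + r_*(r), r = 1/R, on the
   manifold R in [0,a).  On I^+ = {R = 0} (r = +∞) we have r_* = +∞
   (since r_*' = 1/f(1/r) -> 1/f(0) > 0), so t = +∞ >= 0 there. *)
Definition in_Omega (a : R) (rstar : R -> R) (u0 u Rc : R) : Prop :=
  0 <= Rc < a /\ u < u0 /\ (Rc = 0 \/ (0 < Rc /\ 0 <= u + rstar (/ Rc))).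

(* Main.v *)
Require Import Defs.
From Stdlib Require Import Reals Lra.
From Coquelicot Require Import Coquelicot.
Open Scope R_scope.

Lemma rstar_mvt (a : R) (f rstar : R -> R)
  (hrstar : forall r, / a < r -> is_derive rstar r (/ f (/ r))) p q :
  / a < p -> p <= q -> exists s, p <= s <= q /\ rstar q - rstar p = / f (/ s) * (q - p).
Proof.
  intros hp hpq.
  destruct (MVT_gen rstar p q (fun r => / f (/ r))) as [s [hs e]].
  - intros x hx. rewrite Rmin_left in hx by lra. apply hrstar. lra.
  - intros x hx. rewrite Rmin_left in hx by lra. apply continuity_pt_filterlim.
    apply (ex_derive_continuous (K := R_AbsRing) (V := R_NormedModule)). eexists. apply hrstar. lra.
  - rewrite Rmin_left in hs by lra. rewrite Rmax_right in hs by lra.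
    exists s. split; [lra|exact e].
Qed.

Lemma bounded_of_lim (u : nat -> R) : is_lim_seq u 0 -> exists M, forall n, Rabs (u n) <= M.
Proof.
  intros h. assert (h2 : is_lim_seq (fun n => Rabs (u n)) (Rabs 0)).
  { pose proof (is_lim_seq_abs u 0 h) as h3. simpl in h3. exact h3. }
  apply is_lim_seq_Reals in h2.
  destruct (cauchy_bound (fun n => Rabs (u n)) (CV_Cauchy _ (exist _ _ h2))) as [M hM].
  exists M. intros n. apply hM. exists n. reflexivity.
Qed.

Lemma f_cont0 (a : R) (f : R -> R) (ha : 0 < a) (hf : analytic_on_0a a f) :
  forall eps, 0 < eps -> exists del, 0 < del /\ forall x, 0 <= x < del -> Rabs (f x - f 0) < eps.
Proof.
  intros eps heps.
  destruct (hf 0) as [c [d [hd hc]]]; [lra|].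
  set (x1 := Rmin d a / 2).
  assert (hx1 : 0 < x1). { unfold x1. apply Rmin_case; lra. }
  assert (hx1d : x1 < d /\ x1 < a). { unfold x1. split.
    - assert (Rmin d a <= d) by apply Rmin_l. lra.
    - assert (Rmin d a <= a) by apply Rmin_r. lra. }
  assert (hser : forall x, 0 <= x <= x1 -> is_pseries c x (f x)).
  { intros x hx. specialize (hc x). replace (x - 0) with x in hc by ring. apply hc; [lra|].
    rewrite Rabs_pos_eq; lra. }
  assert (hrad : Rbar_le x1 (CV_radius c)).
  { destruct (CV_radius_bounded c) as [hub _]. apply hub.
    assert (hs := hser x1 ltac:(lra)).
    assert (hl := ex_series_lim_0 _ (ex_intro _ _ hs)).
    destruct (bounded_of_lim _ hl) as [M hM]. exists M. intros n.
    specialize (hM n). rewrite pow_n_pow in hM. unfold scal in hM; simpl in hM.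
    unfold mult in hM; simpl in hM. rewrite Rmult_comm. exact hM. }
  assert (hct : continuity_pt (PSeries c) 0).
  { apply PSeries_continuity. rewrite Rabs_R0.
    apply Rbar_lt_le_trans with x1; [simpl; lra | exact hrad]. }
  unfold continuity_pt, continue_in, limit1_in, limit_in in hct.
  destruct (hct eps heps) as [alp [halp H]].
  exists (Rmin alp x1). split; [apply Rmin_case; lra|].
  intros x hx.
  assert (hxa : x < alp /\ x < x1).
  { split; [assert (Rmin alp x1 <= alp) by apply Rmin_l | assert (Rmin alp x1 <= x1) by apply Rmin_r]; lra. }
  destruct (Req_dec x 0) as [->|hx0]. { rewrite Rminus_diag, Rabs_R0. exact heps. }
  rewrite <- (is_pseries_unique _ _ _ (hser x ltac:(lra))).
  rewrite <- (is_pseries_unique _ _ _ (hser 0 ltac:(lra))).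
  apply H. split; [split; [exact I| lra]|]. simpl. unfold R_dist. rewrite Rminus_0_r, Rabs_pos_eq; lra.
Qed.
Lemma part1 (f : R -> R) u Rc th :
  gKK f u Rc th = 4 * u ^ 2 * (1 + Rc * u + / 4 * Rc ^ 2 * u ^ 2 * f Rc).
Proof. unfold gKK, ghat, K_u, K_R. field. Qed.

Lemma inv_lt_of_gt x y : 0 < x -> x < y -> / y < / x.
Proof. intros. apply Rinv_lt_contravar; nra. Qed.

Lemma forward (a : R) (f rstar : R -> R)
  (ha : 0 < a)
  (hf_an : analytic_on_0a a f)
  (hf_pos : forall x, 0 <= x < a -> 0 < f x)
  (hrstar : forall r, / a < r -> is_derive rstar r (/ f (/ r))) :
  f 0 > 3 / 4 ->
   exists u0 c, u0 < 0 /\ 0 < c /\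
     forall u Rc th, in_Omega a rstar u0 u Rc ->
       gKK f u Rc th >= c * u ^ 2.
Proof.
  intros hF.
  set (F := f 0) in *.
  set (G := (F + 3/4)/2).
  assert (hG : 3/4 < G /\ G < F) by (unfold G; lra).
  destruct (f_cont0 a f ha hf_an (F - G) ltac:(lra)) as [del [hdel hcont]].
  assert (hfG : forall x, 0 <= x < del -> G < f x).
  { intros x hx. specialize (hcont x hx). apply Rabs_def2 in hcont. unfold F in *. lra. }
  set (r1 := / a + / del + 1).
  assert (hia : 0 < / a) by (apply Rinv_0_lt_compat; lra).
  assert (hid : 0 < / del) by (apply Rinv_0_lt_compat; lra).
  assert (hr1d : / r1 < del).
  { rewrite <- (Rinv_inv del). apply inv_lt_of_gt; unfold r1; lra. }
  assert (hr1a : / a < r1) by (unfold r1; lra).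
  assert (hr1p : 0 < r1) by lra.
  set (iG := / G).
  assert (hiG : G * iG = 1) by (unfold iG; field; lra).
  set (k := (G - 3/4) * iG / 2).
  assert (hk : 0 < k /\ k < 1/2).
  { unfold k. assert (0 < iG) by (unfold iG; apply Rinv_0_lt_compat; lra). split; nra. }
  set (eta := Rmin k iG).
  assert (heta : 0 < eta /\ eta <= k /\ eta <= iG).
  { unfold eta. split; [apply Rmin_case; unfold iG in *; try lra; apply Rinv_0_lt_compat; lra|].
    split; [apply Rmin_l|apply Rmin_r]. }
  set (s1 := Rabs (rstar r1)).
  assert (hs1 : 0 <= s1) by apply Rabs_pos.
  set (M := s1 + s1 / eta * iG + 1).
  assert (hM : s1 + 1 <= M).
  { unfold M. assert (0 <= s1 / eta * iG); [|lra].
    apply Rmult_le_pos; [apply Rmult_le_pos; [lra| left; apply Rinv_0_lt_compat; lra] | unfold iG; left; apply Rinv_0_lt_compat; lra]. }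
  exists (- M), (4 * k). split; [lra|]. split; [lra|].
  intros u Rc th [hR [hu hO]].
  rewrite part1.
  destruct hO as [-> | [hRp ht]].
  { assert (0 <= u ^ 2) by (apply pow2_ge_0). nra. }
  set (r := / Rc) in *.
  assert (hRr : Rc = / r) by (unfold r; rewrite Rinv_inv; reflexivity).
  assert (hra : / a < r) by (unfold r; apply inv_lt_of_gt; lra).
  assert (hrp : 0 < r) by lra.
  assert (hrR : r * Rc = 1) by (unfold r; field; lra).
  destruct (Rle_lt_dec r r1) as [hle | hlt].
  { exfalso. destruct (rstar_mvt a f rstar hrstar r r1 hra hle) as [s [hs e]].
    assert (0 < / s) by (apply Rinv_0_lt_compat; lra).
    assert (/ s < a) by (rewrite <- (Rinv_inv a); apply inv_lt_of_gt; lra).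
    assert (0 < / f (/ s)) by (apply Rinv_0_lt_compat, hf_pos; lra).
    assert (0 <= / f (/ s) * (r1 - r)) by (apply Rmult_le_pos; lra).
    assert (rstar r1 <= s1) by (apply Rle_abs). lra. }
  destruct (rstar_mvt a f rstar hrstar r1 r hr1a (Rlt_le _ _ hlt)) as [s [hs e]].
  assert (hsp : 0 < / s) by (apply Rinv_0_lt_compat; lra).
  assert (hsd : / s < del).
  { apply Rle_lt_trans with (/ r1); [|exact hr1d]. apply Rinv_le_contravar; lra. }
  assert (hfs : G < f (/ s)) by (apply hfG; lra).
  assert (hifs : / f (/ s) < iG) by (unfold iG; apply inv_lt_of_gt; lra).
  assert (hrst : rstar r <= s1 + r * iG).
  { assert (rstar r1 <= s1) by (apply Rle_abs).
    assert (/ f (/ s) * (r - r1) <= iG * (r - r1)) by (apply Rmult_le_compat_r; lra).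
    assert (0 < iG) by (unfold iG; apply Rinv_0_lt_compat; lra).
    nra. }
  assert (hiGp : 0 < iG) by (unfold iG; apply Rinv_0_lt_compat; lra).
  assert (hfR : G < f Rc).
  { apply hfG. split; [lra|]. rewrite hRr. apply Rle_lt_trans with (/ r1); [|exact hr1d].
    apply Rinv_le_contravar; lra. }
  assert (hr_big : s1 < r * eta).
  { assert (h1 : s1 / eta * iG < r * iG) by (unfold M in *; lra).
    assert (h2 : s1 / eta < r).
    { apply Rmult_lt_reg_r with iG; lra. }
    assert (h3 : s1 / eta * eta = s1) by (field; lra). nra. }
  assert (hx : - (eta + iG) <= Rc * u).
  { assert (h1 : Rc * s1 <= eta) by nra.
    assert (h2 : Rc * (- u) <= Rc * (s1 + r * iG)) by (apply Rmult_le_compat_l; lra).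
    nra. }
  set (x := Rc * u) in *.
  set (X := eta + iG) in *.
  assert (hq1 : 1 + x + / 4 * x ^ 2 * G <= 1 + x + / 4 * Rc ^ 2 * u ^ 2 * f Rc).
  { replace (/ 4 * Rc ^ 2 * u ^ 2 * f Rc) with (/ 4 * x ^ 2 * f Rc) by (unfold x; ring).
    assert (0 <= x ^ 2) by apply pow2_ge_0. nra. }
  assert (hq2 : 1 - X + / 4 * X ^ 2 * G <= 1 + x + / 4 * x ^ 2 * G).
  { assert (h1 : 0 <= x + X) by lra.
    assert (h2 : 0 <= 1 + G * (x - X) / 4).
    { assert (G * eta <= 1) by nra. assert (G * X <= 2) by (unfold X; nra). nra. }
    assert (ee : 1 + x + / 4 * x ^ 2 * G - (1 - X + / 4 * X ^ 2 * G) = (x + X) * (1 + G * (x - X) / 4)) by field.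
    nra. }
  assert (hq3 : k <= 1 - X + / 4 * X ^ 2 * G).
  { assert (ee : 1 - X + / 4 * X ^ 2 * G = 2 * k - eta / 2 + / 4 * G * eta ^ 2).
    { unfold X, k. 
      assert (e2 : / 4 * (eta + iG) ^ 2 * G = /4 * G * eta^2 + eta / 2 * (G * iG) + / 4 * iG * (G * iG)) by field.
      rewrite e2, hiG. nra. }
    assert (0 <= G * eta ^ 2) by (apply Rmult_le_pos; [lra | apply pow2_ge_0]).
    lra. }
  assert (0 <= u ^ 2) by apply pow2_ge_0.
  nra.
Qed.

Lemma backward (a : R) (f rstar : R -> R)
  (ha : 0 < a)
  (hf_an : analytic_on_0a a f)
  (hf_pos : forall x, 0 <= x < a -> 0 < f x)
  (hrstar : forall r, / a < r -> is_derive rstar r (/ f (/ r))) :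
   (exists u0 c, u0 < 0 /\ 0 < c /\
     forall u Rc th, in_Omega a rstar u0 u Rc ->
       gKK f u Rc th >= c * u ^ 2) -> f 0 > 3 / 4.
Proof.
  intros [u0 [c [hu0 [hc H]]]].
  destruct (Rlt_le_dec (3/4) (f 0)) as [h|hF]; [exact h|exfalso].
  set (F := f 0) in *.
  assert (hFp : 0 < F) by (unfold F; apply hf_pos; lra).
  set (d := c * F / 16).
  assert (hd : 0 < d) by (unfold d; nra).
  set (G := F + d). set (G' := F + 2 * d).
  destruct (f_cont0 a f ha hf_an d hd) as [del [hdel hcont]].
  assert (hfG : forall x, 0 <= x < del -> f x < G).
  { intros x hx. specialize (hcont x hx). apply Rabs_def2 in hcont. unfold G, F in *. lra. }
  set (r1 := / a + / del + 1).
  assert (hia : 0 < / a) by (apply Rinv_0_lt_compat; lra).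
  assert (hid : 0 < / del) by (apply Rinv_0_lt_compat; lra).
  assert (hr1d : / r1 < del).
  { rewrite <- (Rinv_inv del). apply inv_lt_of_gt; unfold r1; lra. }
  assert (hr1a : / a < r1) by (unfold r1; lra).
  assert (hr1p : 0 < r1) by lra.
  set (iG := / G). set (iG' := / G').
  assert (hiG : G * iG = 1) by (unfold iG, G; field; lra).
  assert (hiG' : G' * iG' = 1) by (unfold iG', G'; field; lra).
  assert (hiGp : 0 < iG) by (unfold iG, G; apply Rinv_0_lt_compat; lra).
  assert (hiGp' : 0 < iG') by (unfold iG', G'; apply Rinv_0_lt_compat; lra).
  assert (hgap : iG' < iG) by (unfold iG, iG'; apply inv_lt_of_gt; unfold G, G'; lra).
  set (s1 := Rabs (rstar r1)).
  assert (hs1 : 0 <= s1) by apply Rabs_pos.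
  set (B := (r1 * iG + s1) / (iG - iG')).
  assert (hB : B * (iG - iG') = r1 * iG + s1) by (unfold B; field; lra).
  assert (hB0 : 0 <= B) by (unfold B; apply Rmult_le_pos; [nra| left; apply Rinv_0_lt_compat; lra]).
  set (r := r1 + (- u0) * G' + B + 1).
  assert (hG'p : 0 < G') by (unfold G'; lra).
  assert (hr1r : r1 < r) by (unfold r; nra).
  assert (hrp : 0 < r) by lra.
  set (u := - r * iG').
  assert (hrs : r * iG' <= rstar r).
  { destruct (rstar_mvt a f rstar hrstar r1 r hr1a (Rlt_le _ _ hr1r)) as [s [hs e]].
    assert (hsp : 0 < / s) by (apply Rinv_0_lt_compat; lra).
    assert (hsd : / s < del).
    { apply Rle_lt_trans with (/ r1); [|exact hr1d]. apply Rinv_le_contravar; lra. }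
    assert (/ s < a) by (rewrite <- (Rinv_inv a); apply inv_lt_of_gt; lra).
    assert (hfs : f (/ s) < G) by (apply hfG; lra).
    assert (hfsp : 0 < f (/ s)) by (apply hf_pos; lra).
    assert (hifs : iG < / f (/ s)) by (unfold iG; apply inv_lt_of_gt; lra).
    assert (iG * (r - r1) <= / f (/ s) * (r - r1)) by (apply Rmult_le_compat_r; lra).
    assert (- s1 <= rstar r1) by (unfold s1; pose proof (Rle_abs (- rstar r1)) as hh; rewrite Rabs_Ropp in hh; lra).
    assert (hBr : B <= r) by (unfold r; nra).
    assert (B * (iG - iG') <= r * (iG - iG')) by (apply Rmult_le_compat_r; lra).
    nra. }
  assert (hO : in_Omega a rstar u0 u (/ r)).
  { assert (0 < / r) by (apply Rinv_0_lt_compat; lra).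
    split; [split; [lra|] |].
    { rewrite <- (Rinv_inv a). apply inv_lt_of_gt; lra. }
    split.
    { unfold u. assert (- u0 * G' < r) by (unfold r; nra). nra. }
    right. split; [lra|]. rewrite Rinv_inv. unfold u. lra. }
  specialize (H u (/ r) 0 hO). rewrite part1 in H.
  assert (hx : / r * u = - iG') by (unfold u; field; lra).
  assert (hfr : f (/ r) < G).
  { apply hfG. split; [left; apply Rinv_0_lt_compat; lra|].
    apply Rle_lt_trans with (/ r1); [|exact hr1d]. apply Rinv_le_contravar; lra. }
  replace (/ 4 * (/ r) ^ 2 * u ^ 2 * f (/ r)) with (/ 4 * (/ r * u) ^ 2 * f (/ r)) in H by ring.
  rewrite hx in H.
  assert (hq : 1 + - iG' + / 4 * (- iG') ^ 2 * f (/ r) <= c / 8).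
  { assert (h1 : / 4 * (- iG') ^ 2 * f (/ r) <= / 4 * iG' * (G' * iG')).
    { assert (f (/ r) <= G') by (unfold G' , G in *; lra). nra. }
    rewrite hiG' in h1.
    assert (h2 : 1 - 3 / 4 * iG' <= c / 8).
    { assert (ee : 1 - 3/4 * iG' = (G' - 3/4) * iG') by nra.
      rewrite ee.
      assert (G' - 3/4 <= 2 * d) by (unfold G'; lra).
      assert (iG' * F <= 1) by (unfold G' in hiG'; nra).
      unfold d in *. nra. }
    lra. }
  assert (hu2 : 0 < u ^ 2) by (unfold u; apply pow2_gt_0; nra).
  nra.
Qed.

Theorem lemma3 (a : R) (f rstar : R -> R)
  (ha : 0 < a)
  (hf_an : analytic_on_0a a f)
  (hf_pos : forall x, 0 <= x < a -> 0 < f x)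
  (hrstar : forall r, / a < r -> is_derive rstar r (/ f (/ r))) :
  (forall u Rc th, 0 <= Rc < a ->
     gKK f u Rc th = 4 * u ^ 2 * (1 + Rc * u + / 4 * Rc ^ 2 * u ^ 2 * f Rc))
  /\
  (f 0 > 3 / 4 <->
   exists u0 c, u0 < 0 /\ 0 < c /\
     forall u Rc th, in_Omega a rstar u0 u Rc ->
       gKK f u Rc th >= c * u ^ 2).
Proof.
  split; [intros; apply part1|].
  split; [apply forward | apply backward]; assumption.
Qed.
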